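(* Let $r$ be a nonnegative integer. For real $x$ with $|x|<1$, $$\sum_{m=0}^\infty\zeta^\star(r+2,\{2\}^m)x^{2m}=\sum_{k=1}^\infty\frac{1}{k^{r+2}}\frac{\Gamma(k+x)\Gamma(k-x)}{\Gamma(k)^2}.$$
   Context: $\zeta^\star(\alpha_1,\ldots,\alpha_r)=\sum_{1\le k_1\le\cdots\le k_r}k_1^{-\alpha_1}\cdots k_r^{-\alpha_r}$ for positive integers $\alpha_i$ with $\alpha_1\ge2$ in the nontrivial-first-entry convention used here (the argument tuple $(r+2,\{2\}^m)$ consists of $r+2$ followed by $m$ copies of $2$; for $m=0$ it is $\zeta(r+2)$). $\Gamma$ is the gamma function. *)

(* Defs.v *)
From Stdlib Require Import Reals List.
From Coquelicot Require Import Coquelicot.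
Open Scope R_scope.

(* Euler's Gamma function, Gamma(s) = int_0^oo t^(s-1) e^(-t) dt
   (used only at arguments s > 0, where the improper integral converges). *)
Definition Gamma (s : R) : R :=
  RInt_gen (fun t => Rpower t (s - 1) * exp (- t))
           (at_right 0) (Rbar_locally p_infty).

(* zs_tail [a1; ...; ar] n
     = sum_{n <= k1 <= k2 <= ... <= kr} k1^{-a1} ... kr^{-ar},
   written as the literal nested series (all terms are nonnegative). *)
Fixpoint zs_tail (l : list nat) (n : nat) : R :=
  match l with
  | nil => 1
  | a :: l' => Series (fun i => / (INR (n + i)) ^ a * zs_tail l' (n + i)%nat)
  end.

Definition zeta_star (l : list nat) : R := zs_tail l 1.

(* Main.v *)
Require Import Defs.
From Stdlib Require Import Reals List.
From Coquelicot Require Import Coquelicot.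
From Stdlib Require Import Lra Lia.
Open Scope R_scope.

Lemma ser_lim (a : nat -> R) (l : R) : is_series a l <-> is_lim_seq (fun N => sum_f_R0 a N) l.
Proof.
  split; intro H.
  - apply is_lim_seq_ext with (sum_n a). intro n; apply sum_n_Reals. exact H.
  - assert (H' : is_lim_seq (sum_n a) l).
    { apply is_lim_seq_ext with (fun N => sum_f_R0 a N). intro n; symmetry; apply sum_n_Reals. exact H. }
    exact H'.
Qed.

Lemma sum_incr (a : nat -> R) (N k : nat) : (forall n, 0 <= a n) ->
  sum_f_R0 a N <= sum_f_R0 a (k + N).
Proof.
  intro Ha; induction k as [|k IH]; simpl; [lra|].
  replace (S (k + N)) with (S (k+N)) by lia. specialize (Ha (S (k+N))). lra.
Qed.

Lemma ps_le (a : nat -> R) (l : R) : (forall n, 0 <= a n) -> is_series a l ->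
  forall N, sum_f_R0 a N <= l.
Proof.
  intros Ha H N. apply ser_lim in H.
  apply (is_lim_seq_incr_n _ N) in H.
  assert (HL := is_lim_seq_le (fun _ => sum_f_R0 a N) _ (sum_f_R0 a N) l
     (fun n => sum_incr a N n Ha) (is_lim_seq_const _) H). simpl in HL. exact HL.
Qed.

Lemma ser_nonneg (a : nat -> R) (l : R) : (forall n, 0 <= a n) -> is_series a l -> 0 <= l.
Proof. intros Ha H. apply Rle_trans with (sum_f_R0 a 0). simpl; apply Ha. apply ps_le; auto. Qed.

Lemma ser_bounded (a : nat -> R) (M : R) : (forall n, 0 <= a n) ->
  (forall N, sum_f_R0 a N <= M) -> exists l, is_series a l /\ l <= M.
Proof.
  intros Ha HM.
  destruct (ex_finite_lim_seq_incr (fun N => sum_f_R0 a N) M) as [l Hl].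
  - intro n; simpl; specialize (Ha (S n)); lra.
  - exact HM.
  - exists l; split. apply ser_lim; exact Hl.
    assert (HL := is_lim_seq_le _ (fun _ => M) l M HM Hl (is_lim_seq_const _)). exact HL.
Qed.

Lemma ser_le (a b : nat -> R) (la lb : R) : (forall n, a n <= b n) ->
  is_series a la -> is_series b lb -> la <= lb.
Proof.
  intros H Ha Hb. apply ser_lim in Ha; apply ser_lim in Hb.
  assert (HL := is_lim_seq_le _ _ la lb (fun N => sum_Rle a b N (fun n _ => H n)) Ha Hb). exact HL.
Qed.

Lemma ser_sum_fin (a : nat -> nat -> R) (A : nat -> R) (M : nat) :
  (forall m, is_series (a m) (A m)) ->
  is_series (fun k => sum_f_R0 (fun m => a m k) M) (sum_f_R0 A M).
Proof.
  intro H; induction M as [|M IH]; simpl. apply H.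
  apply (is_series_plus _ _ _ _ IH (H (S M))).
Qed.

Lemma ser_ex_le (a b : nat -> R) (lb : R) : (forall n, 0 <= a n <= b n) -> is_series b lb ->
  exists la, is_series a la /\ la <= lb.
Proof.
  intros H Hb. apply ser_bounded. intro n; apply H.
  intro N; apply Rle_trans with (sum_f_R0 b N).
  apply sum_Rle; intros; apply H. apply ps_le; auto. intro n; specialize (H n); lra.
Qed.

Lemma tonelli (a : nat -> nat -> R) (A B : nat -> R) (L : R) :
  (forall m k, 0 <= a m k) ->
  (forall m, is_series (a m) (A m)) ->
  (forall k, is_series (fun m => a m k) (B k)) ->
  is_series B L -> is_series A L.
Proof.
  intros Hpos HA HB HL.
  assert (HA0 : forall m, 0 <= A m) by (intro m; exact (ser_nonneg _ _ (Hpos m) (HA m))).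
  assert (HB0 : forall k, 0 <= B k) by (intro k; exact (ser_nonneg _ _ (fun m => Hpos m k) (HB k))).
  destruct (ser_bounded A L HA0) as [L' [HL' HL'L]].
  { intro M. apply (ser_le _ _ _ _ (fun k => ps_le _ _ (fun m => Hpos m k) (HB k) M) (ser_sum_fin a A M HA) HL). }
  assert (L <= L').
  { destruct (ser_bounded B L' HB0) as [L2 [H2 H2']].
    { intro K.
      assert (HK := ser_sum_fin (fun k m => a m k) B K HB).
      exact (ser_le _ _ _ _ (fun m => ps_le _ _ (Hpos m) (HA m) K) HK HL'). }
    assert (L = L2) by (rewrite <- (is_series_unique _ _ HL); apply is_series_unique; auto).
    lra. }
  replace L with L' by lra. exact HL'.
Qed.

Lemma ser_ext (a b : nat -> R) (l : R) : (forall n, a n = b n) -> is_series a l -> is_series b l.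
Proof. apply is_series_ext. Qed.

Lemma sum_scal_l (k : R) (f : nat -> R) (N : nat) :
  sum_f_R0 (fun m => k * f m) N = k * sum_f_R0 f N.
Proof. induction N as [|N IH]; simpl; [ring| rewrite IH; ring]. Qed.

Lemma ser_incr1 (a : nat -> R) (l : R) : is_series a l -> is_series (fun k => a (S k)) (l - a O).
Proof.
  intro H. apply ser_lim in H. apply ser_lim.
  apply is_lim_seq_incr_1 in H.
  apply is_lim_seq_ext with (fun N => sum_f_R0 a (S N) + - a O).
  { intro N. induction N as [|N IH]; simpl in *. ring. rewrite <- IH. ring. }
  apply (is_lim_seq_plus' _ _ l (- a O)). exact H. apply is_lim_seq_const.
Qed.

Lemma ser_plus (a b : nat -> R) (la lb : R) : is_series a la -> is_series b lb ->
  is_series (fun n => a n + b n) (la + lb).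
Proof. intros Ha Hb. exact (is_series_plus _ _ _ _ Ha Hb). Qed.

Lemma ser_scal (k : R) (a : nat -> R) (l : R) : is_series a l ->
  is_series (fun n => k * a n) (k * l).
Proof. intros Ha. exact (is_series_scal_l k _ _ Ha). Qed.

Lemma telescope (v : nat -> R) (l : R) : is_lim_seq v l ->
  is_series (fun i => v i - v (S i)) (v O - l).
Proof.
  intro H. apply ser_lim.
  apply is_lim_seq_ext with (fun N => v O - v (S N)).
  { intro N; induction N as [|N IH]; simpl in *; lra. }
  apply (is_lim_seq_incr_1 (fun N => v O - v N)).
  replace (v O - l) with (v O + - l) by ring.
  apply (is_lim_seq_plus' _ _ (v O) (-l)). apply is_lim_seq_const.
  exact (proj1 (is_lim_seq_opp v l) H).
Qed.

Lemma inv_lim (n : nat) : is_lim_seq (fun i => / INR (n + i)) 0.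
Proof.
  replace (Finite 0) with (Rbar_inv p_infty) by reflexivity.
  apply is_lim_seq_inv; [|discriminate].
  apply (is_lim_seq_ext (fun i => INR (i + n))). intro i; f_equal; lia.
  apply (is_lim_seq_incr_n INR n). apply is_lim_seq_INR.
Qed.

Definition c (n i : nat) : R := / INR (n + i) ^ 2.

Lemma INR_pos (n : nat) : (1 <= n)%nat -> 1 <= INR n.
Proof. intro H. apply (le_INR 1). exact H. Qed.

Lemma c_pos n i : (1 <= n)%nat -> 0 < c n i.
Proof. intro H. unfold c. assert (1 <= INR (n+i)) by (apply INR_pos; lia).
  apply Rinv_0_lt_compat. apply pow_lt. lra. Qed.

Lemma c_tel n i : (1 <= n)%nat -> c n i <= 2 * (/ INR (n+i) - / INR (n + S i)).
Proof.
  intro H. unfold c. assert (1 <= INR (n+i)) by (apply INR_pos; lia).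
  replace (INR (n + S i)) with (INR (n+i) + 1) by (rewrite <- S_INR; f_equal; lia).
  set (u := INR (n+i)) in *.
  replace (/ u - / (u+1)) with (/ (u * (u+1))) by (field; lra).
  simpl. rewrite Rmult_1_r.
  assert (0 < u*u) by nra. assert (0 < u*(u+1)) by nra.
  apply Rmult_le_reg_l with (u*u*(u*(u+1))). nra.
  replace (u * u * (u * (u + 1)) * / (u * u)) with (u*(u+1)) by (field; lra).
  replace (u * u * (u * (u + 1)) * (2 * / (u * (u + 1)))) with (2*(u*u)) by (field; lra).
  nra.
Qed.

Lemma c_series n : (1 <= n)%nat -> exists l, is_series (c n) l /\ l <= 2.
Proof.
  intro H.
  assert (HT := telescope (fun i => / INR (n + i)) 0 (inv_lim n)).
  apply (is_series_scal_l 2) in HT.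
  destruct (ser_ex_le (c n) _ _ (fun i => conj (Rlt_le _ _ (c_pos n i H)) (c_tel n i H)) HT) as [l [Hl Hl2]].
  exists l; split; auto.
  change (scal 2 (/ INR (n + 0) - 0)) with (2 * (/ INR (n+0) - 0)) in Hl2.
  replace (n+0)%nat with n in Hl2 by lia.
  assert (1 <= INR n) by (apply INR_pos; lia).
  assert (/ INR n <= 1). { rewrite <- Rinv_1. apply Rinv_le_contravar; lra. }
  lra.
Qed.

Definition h (m n : nat) : R := zs_tail (repeat 2%nat m) n.

Lemma h_S m n : h (S m) n = Series (fun i => c n i * h m (n + i)).
Proof. reflexivity. Qed.
Lemma h_0 n : h O n = 1.
Proof. reflexivity. Qed.

Lemma h_bound m : forall n, (1 <= n)%nat -> 0 <= h m n <= 2 ^ m /\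
  is_series (fun i => c n i * h m (n + i)) (h (S m) n).
Proof.
  induction m as [|m IH]; intros n Hn.
  - rewrite h_0. split. simpl; lra.
    destruct (c_series n Hn) as [l [Hl _]].
    rewrite h_S. assert (E : forall i, c n i * h 0 (n+i) = c n i) by (intro i; rewrite h_0; ring).
    rewrite (Series_ext _ _ E). rewrite (is_series_unique _ _ Hl).
    apply (is_series_ext (c n)). intro; rewrite E; auto. exact Hl.
  - destruct (c_series n Hn) as [l [Hl Hl2]].
    apply (is_series_scal_r (2^m)) in Hl.
    assert (Hb : forall i, 0 <= c n i * h m (n+i) <= c n i * 2^m).
    { intro i. destruct (IH (n+i)%nat ltac:(lia)) as [[H1 H2] _].
      assert (0 < c n i) by (apply c_pos; lia). split; nra. }
    destruct (ser_ex_le _ _ _ Hb Hl) as [la [Hla Hla2]].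
    assert (Eh : h (S m) n = la) by (rewrite h_S; apply is_series_unique; auto).
    split; [split|].
    + rewrite Eh. exact (ser_nonneg _ _ (fun i => proj1 (Hb i)) Hla).
    + rewrite Eh. simpl. assert (0 <= 2^m) by (apply pow_le; lra). nra.
    + destruct (c_series n Hn) as [l' [Hl' _]].
      assert (Hb' : forall i, 0 <= c n i * h (S m) (n+i) <= c n i * 2^(S m)).
      { intro i. assert (Hi : (1 <= n + i)%nat) by lia.
        assert (Eh' : h (S m) (n+i) = Series (fun j => c (n+i) j * h m (n+i+j))) by apply h_S.
        destruct (c_series (n+i) Hi) as [l3 [Hl3 Hl32]].
        apply (is_series_scal_r (2^m)) in Hl3.
        assert (Hb3 : forall j, 0 <= c (n+i) j * h m (n+i+j) <= c (n+i) j * 2^m).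
        { intro j. destruct (IH (n+i+j)%nat ltac:(lia)) as [[H1 H2] _].
          assert (0 < c (n+i) j) by (apply c_pos; lia). split; nra. }
        destruct (ser_ex_le _ _ _ Hb3 Hl3) as [lb [Hlb Hlb2]].
        rewrite Eh', (is_series_unique _ _ Hlb).
        assert (0 <= lb) by exact (ser_nonneg _ _ (fun j => proj1 (Hb3 j)) Hlb).
        assert (0 < c n i) by (apply c_pos; lia). simpl.
        assert (0 <= 2^m) by (apply pow_le; lra).
        assert (lb <= 2*2^m) by nra. split. nra. apply Rmult_le_compat_l; lra. }
      apply (is_series_scal_r (2^(S m))) in Hl'.
      destruct (ser_ex_le _ _ _ Hb' Hl') as [lc [Hlc _]].
      rewrite h_S. rewrite (is_series_unique _ _ Hlc). exact Hlc.
Qed.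

Lemma h_nonneg m n : (1 <= n)%nat -> 0 <= h m n.
Proof. intro H; apply (h_bound m n H). Qed.

Lemma h_ser m n : (1 <= n)%nat -> is_series (fun i => c n i * h m (n + i)) (h (S m) n).
Proof. intro H; apply (h_bound m n H). Qed.

Lemma h_rec m n : (1 <= n)%nat -> h (S m) n = c n 0 * h m n + h (S m) (S n).
Proof.
  intro H. rewrite h_S. rewrite Series_incr_1.
  2:{ exists (h (S m) n). apply h_ser; auto. }
  replace (n + 0)%nat with n by lia. f_equal.
  rewrite h_S. apply Series_ext. intro i. replace (n + S i)%nat with (S n + i)%nat by lia.
  unfold c. replace (n + S i)%nat with (S n + i)%nat by lia. reflexivity.
Qed.

Section SEQ.
Variable y : R.
Hypothesis Hy : 0 <= y < 1.
Variable G : nat -> R.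
Hypothesis HGrec : forall n, (1 <= n)%nat -> G (S n) = G n * (1 - y * c n 0).
Hypothesis HG1 : forall n, (1 <= n)%nat -> 1 <= G n.
Hypothesis HGlim : is_lim_seq G 1.

Definition T (M n : nat) := sum_f_R0 (fun m => h m n * y ^ m) M.

Lemma G_tel n : (1 <= n)%nat -> is_series (fun i => y * c n i * G (n + i)) (G n - 1).
Proof.
  intro Hn.
  assert (H := telescope (fun i => G (n + i)) 1 ltac:(apply (is_lim_seq_ext (fun i => G (i + n)));
     [intro; f_equal; lia | apply (is_lim_seq_incr_n G n); exact HGlim])).
  cbv beta in H. replace (n + 0)%nat with n in H by lia.
  apply (ser_ext _ _ _) with (2 := H). intro i.
  replace (n + S i)%nat with (S (n + i)) by lia. rewrite HGrec by lia.
  unfold c. replace (n + i + 0)%nat with (n+i)%nat by lia. ring.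
Qed.

Lemma T_step M n : (1 <= n)%nat -> exists X,
  is_series (fun i => c n i * T M (n + i)) X /\ T (S M) n = 1 + y * X.
Proof.
  intro Hn.
  assert (H := ser_sum_fin (fun m i => c n i * h m (n + i) * y ^ m) (fun m => h (S m) n * y^m) M
     (fun m => is_series_scal_r _ _ _ (h_ser m n Hn))).
  eexists; split.
  - apply (ser_ext _ _ _) with (2 := H).
    intro i. unfold T. rewrite <- sum_scal_l. apply sum_eq. intros; ring.
  - unfold T. rewrite decomp_sum by lia. simpl pred. rewrite h_0. simpl.
    f_equal. ring. rewrite <- sum_scal_l. apply sum_eq. intros; simpl; ring.
Qed.

Lemma T_nonneg M n : (1 <= n)%nat -> 0 <= T M n.
Proof.
  intro Hn. unfold T. apply cond_pos_sum. intro m.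
  apply Rmult_le_pos. apply h_nonneg; auto. apply pow_le; lra.
Qed.

Lemma T_le_G M : forall n, (1 <= n)%nat -> T M n <= G n.
Proof.
  induction M as [|M IH]; intros n Hn.
  - unfold T; simpl. rewrite h_0. specialize (HG1 n Hn). lra.
  - destruct (T_step M n Hn) as [X [HX EX]]. rewrite EX.
    assert (H2 := G_tel n Hn).
    apply (ser_scal y) in HX.
    assert (X' : y * X <= G n - 1).
    { apply (ser_le (fun i => y * (c n i * T M (n + i))) (fun i => y * c n i * G (n + i))); auto.
      intro i. assert (0 < c n i) by (apply c_pos; lia).
      assert (T M (n+i) <= G (n+i)) by (apply IH; lia).
      assert (0 <= y * c n i) by nra. nra. }
    lra.
Qed.

Definition Sf (n : nat) := Series (fun m => h m n * y ^ m).

Lemma Sf_ser n : (1 <= n)%nat -> is_series (fun m => h m n * y ^ m) (Sf n) /\ 1 <= Sf n <= G n.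
Proof.
  intro Hn.
  destruct (ser_bounded (fun m => h m n * y ^ m) (G n)) as [l [Hl Hl2]].
  - intro m. apply Rmult_le_pos. apply h_nonneg; auto. apply pow_le; lra.
  - intro N. apply (T_le_G N n Hn).
  - unfold Sf. rewrite (is_series_unique _ _ Hl). repeat split; auto.
    apply Rle_trans with (T 0 n). unfold T; simpl; rewrite h_0; lra.
    apply ps_le; auto. intro m. apply Rmult_le_pos. apply h_nonneg; auto. apply pow_le; lra.
Qed.

Lemma Sf_rec n : (1 <= n)%nat -> Sf (S n) = Sf n * (1 - y * c n 0).
Proof.
  intro Hn.
  destruct (Sf_ser n Hn) as [H1 _]. destruct (Sf_ser (S n) ltac:(lia)) as [H2 _].
  assert (H1' : is_series (fun m => h (S m) n * y ^ (S m)) (Sf n - 1)).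
  { assert (K := ser_incr1 _ _ H1). cbv beta in K. rewrite h_0 in K. simpl pow in K.
    replace (Sf n - 1) with (Sf n - 1 * 1) by ring. exact K. }
  assert (H2' : is_series (fun m => h (S m) (S n) * y ^ (S m)) (Sf (S n) - 1)).
  { assert (K := ser_incr1 _ _ H2). cbv beta in K. rewrite h_0 in K. simpl pow in K.
    replace (Sf (S n) - 1) with (Sf (S n) - 1 * 1) by ring. exact K. }
  apply (ser_scal (y * c n 0)) in H1.
  assert (H3 := ser_plus _ _ _ _ H1 H2').
  assert (H4 : is_series (fun m => h (S m) n * y ^ (S m)) (y * c n 0 * Sf n + (Sf (S n) - 1))).
  { apply (ser_ext _ _ _) with (2 := H3). intro m. rewrite (h_rec m n Hn).
    simpl; ring. }
  assert (E := is_series_unique _ _ H1'). rewrite (is_series_unique _ _ H4) in E.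
  lra.
Qed.

Lemma Sf_eq_G : forall n, (1 <= n)%nat -> Sf n = G n.
Proof.
  assert (G1pos : 0 < G 1) by (specialize (HG1 1%nat (le_n 1)); lra).
  set (rho := Sf 1 / G 1).
  assert (Hr : forall n, (1 <= n)%nat -> Sf n = rho * G n).
  { intros n Hn. induction Hn as [|n Hn IH].
    - unfold rho; field; lra.
    - rewrite Sf_rec by auto. rewrite HGrec by auto. rewrite IH. ring. }
  assert (rho <= 1).
  { destruct (Sf_ser 1 (le_n 1)) as [_ [_ HH]]. unfold rho.
    apply Rmult_le_reg_r with (G 1); auto. unfold Rdiv; rewrite Rmult_assoc, Rinv_l by lra. lra. }
  assert (rho >= 1).
  { destruct (Rlt_or_le rho 1) as [Hlt|]; [exfalso|lra].
    assert (rpos : 0 < rho).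
    { destruct (Sf_ser 1 (le_n 1)) as [_ [HH _]]. unfold rho. apply Rdiv_lt_0_compat; lra. }
    assert (Hb : forall n, (1 <= n)%nat -> / rho <= G n).
    { intros n Hn. destruct (Sf_ser n Hn) as [_ [HH _]]. rewrite Hr in HH by auto.
      apply Rmult_le_reg_l with rho; auto. rewrite Rinv_r by lra. lra. }
    assert (Hgt : 1 < / rho).
    { rewrite <- Rinv_1. apply Rinv_lt_contravar; lra. }
    apply is_lim_seq_spec in HGlim.
    destruct (HGlim (mkposreal (/ rho - 1) ltac:(lra))) as [N HN].
    specialize (HN (S N) ltac:(lia)). specialize (Hb (S N) ltac:(lia)). simpl in HN.
    apply Rabs_lt_between in HN. lra. }
  intros n Hn. rewrite Hr by auto. replace rho with 1 by lra. ring.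
Qed.

Lemma S_series n : (1 <= n)%nat -> is_series (fun m => h m n * y ^ m) (G n).
Proof. intro Hn. rewrite <- Sf_eq_G by auto. apply Sf_ser; auto. Qed.

End SEQ.

Lemma main_abstract (r : nat) (x : R) (hx : Rabs x < 1) (Gr : R -> R)
  (F1 : forall n, (1 <= n)%nat -> Gr (INR (S n)) = Gr (INR n) * (1 - x ^ 2 * c n 0))
  (F2 : forall n, (1 <= n)%nat -> 1 <= Gr (INR n))
  (F3 : is_lim_seq (fun n => Gr (INR n)) 1) :
  exists L : R,
    is_series (fun m : nat => zeta_star ((r + 2)%nat :: repeat 2%nat m) * x ^ (2 * m)) L /\
    is_series (fun j : nat => / INR (S j) ^ (r + 2) * Gr (INR (S j))) L.
Proof.
  set (y := x ^ 2).
  assert (Hy : 0 <= y < 1).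
  { unfold y. split. apply pow2_ge_0. 
    assert (Rabs x * Rabs x < 1). { assert (0 <= Rabs x) by apply Rabs_pos. nra. }
    rewrite <- Rabs_mult in H. simpl. rewrite Rmult_1_r. 
    apply Rle_lt_trans with (Rabs (x*x)); auto. apply RRle_abs. }
  set (G := fun n => Gr (INR n)).
  assert (HS := S_series y Hy G F1 F2 F3).
  assert (Gdec : forall n, (1 <= n)%nat -> G n <= G 1%nat).
  { intros n Hn; induction Hn as [|n Hn IH]. lra.
    unfold G at 1. rewrite F1 by auto. fold (G n).
    assert (0 < c n 0) by (apply c_pos; auto).
    assert (c n 0 <= 1).
    { unfold c. assert (1 <= INR (n+0)) by (apply INR_pos; lia).
      rewrite <- Rinv_1. apply Rinv_le_contravar. lra. simpl. nra. }
    assert (1 <= G n) by (apply F2; auto). fold y.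
    assert (0 <= y * c n 0 <= 1) by (split; nra). nra. }
  assert (Hk : forall i, 0 < / INR (S i) ^ (r + 2) <= c 1 i).
  { intro i. assert (1 <= INR (S i)) by (apply INR_pos; lia).
    split. apply Rinv_0_lt_compat, pow_lt; lra.
    unfold c. replace (1 + i)%nat with (S i) by lia.
    apply Rinv_le_contravar. apply pow_lt; lra.
    replace (r+2)%nat with (2 + r)%nat by lia. rewrite pow_add.
    assert (1 <= INR (S i) ^ r) by (apply pow_R1_Rle; lra).
    assert (0 < INR (S i) ^ 2) by (apply pow_lt; lra). nra. }
  destruct (c_series 1 (le_n 1)) as [l1 [Hl1 _]].
  set (B := fun j : nat => / INR (S j) ^ (r + 2) * Gr (INR (S j))).
  destruct (ser_ex_le B (fun i => c 1 i * G 1%nat) (l1 * G 1%nat)) as [L [HL _]].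
  { intro i. unfold B. specialize (Hk i). fold (G (S i)).
    assert (1 <= G (S i)) by (apply F2; lia). assert (G (S i) <= G 1%nat) by (apply Gdec; lia).
    split; nra. }
  { apply is_series_scal_r; auto. }
  exists L; split; [|exact HL].
  apply (tonelli (fun m i => / INR (S i) ^ (r + 2) * h m (S i) * y ^ m) _ B); auto.
  - intros m k. apply Rmult_le_pos. apply Rmult_le_pos. left; apply Hk. apply h_nonneg; lia.
    apply pow_le; lra.
  - intro m.
    assert (Hb : forall i, 0 <= / INR (S i) ^ (r + 2) * h m (S i) <= c 1 i * 2 ^ m).
    { intro i. specialize (Hk i). destruct (h_bound m (S i) ltac:(lia)) as [[H1 H2] _].
      split; [nra|]. apply Rmult_le_compat; lra. }
    destruct (ser_ex_le _ _ _ Hb (is_series_scal_r (2^m) _ _ Hl1)) as [lz [Hlz _]].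
    replace (zeta_star ((r + 2)%nat :: repeat 2%nat m) * x ^ (2 * m)) with (lz * y ^ m).
    apply (ser_ext _ _ _) with (2 := is_series_scal_r (y ^ m) _ _ Hlz). intro; ring.
    unfold y. rewrite <- pow_mult. f_equal.
    symmetry. apply is_series_unique. exact Hlz.
  - intro k. unfold B. fold (G (S k)).
    apply (ser_ext _ _ _) with (2 := ser_scal (/ INR (S k) ^ (r + 2)) _ _ (HS (S k) ltac:(lia))).
    intro; ring.
Qed.

Definition gi (s t : R) : R := Rpower t (s - 1) * exp (- t).

Lemma gi_eq s t : gi s t = exp ((s - 1) * ln t - t).
Proof. unfold gi, Rpower. rewrite <- exp_plus. f_equal; ring. Qed.

Lemma gi_pos s t : 0 < gi s t.
Proof. rewrite gi_eq. apply exp_pos. Qed.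

Lemma gi_derive s t : 0 < t -> ex_derive (gi s) t.
Proof.
  intro Ht. apply (ex_derive_ext (fun t => exp ((s - 1) * ln t - t))).
  intro; symmetry; apply gi_eq.
  auto_derive. lra.
Qed.

Lemma gi_cont s t : 0 < t -> continuous (gi s) t.
Proof. intro Ht. apply (@ex_derive_continuous R_AbsRing R_NormedModule). apply gi_derive; auto. Qed.

Lemma gi_exRInt s a b : 0 < a -> 0 < b -> ex_RInt (gi s) a b.
Proof.
  intros Ha Hb. apply (@ex_RInt_continuous R_CompleteNormedModule). intros z Hz. apply gi_cont.
  assert (0 < Rmin a b) by (apply Rmin_glb_lt; auto). lra.
Qed.

Lemma ln_le_sub1 u : 0 < u -> ln u <= u - 1.
Proof. intro Hu. assert (H := exp_ineq1_le (ln u)). rewrite exp_ln in H; lra. Qed.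

Lemma exp_le x y : x <= y -> exp x <= exp y.
Proof. intro H; destruct H as [H|H]; [left; apply exp_increasing; auto| subst; lra]. Qed.

Lemma exp_le_inv x y : exp x <= exp y -> x <= y.
Proof. intro H. destruct (Rle_or_lt x y) as [|H']; auto. apply exp_increasing in H'. lra. Qed.

Definition Cinf (s : R) := exp ((s + 1) * (ln (s + 1) - 1)).

Lemma gi_bound_inf s t : 0 < s -> 0 < t -> gi s t <= Cinf s / (t * t).
Proof.
  intros Hs Ht. rewrite gi_eq. unfold Cinf.
  replace (t * t) with (exp (2 * ln t)).
  2:{ rewrite <- (exp_ln t) at 2 3 by auto. rewrite <- exp_plus. f_equal; ring. }
  unfold Rdiv. rewrite <- exp_Ropp, <- exp_plus. apply exp_le.
  assert (H := ln_le_sub1 (t / (s+1)) ltac:(apply Rdiv_lt_0_compat; lra)).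
  unfold Rdiv in H. rewrite ln_mult in H by (try apply Rinv_0_lt_compat; lra).
  rewrite ln_Rinv in H by lra.
  assert (E: (s - 1) * ln t - t - ((s + 1) * (ln (s + 1) - 1) + - (2 * ln t)) = (s+1) * (ln t + - ln (s+1) - (t * / (s+1) - 1))).
  { field. lra. }
  assert ((s+1) * (ln t + - ln (s+1) - (t * / (s+1) - 1)) <= 0).
  { assert (ln t + - ln (s+1) - (t * / (s+1) - 1) <= 0) by lra. nra. }
  lra.
Qed.

Lemma RInt_le_prim (f g G : R -> R) (u v : R) : u <= v ->
  (forall t, u <= t <= v -> is_derive G t (g t)) ->
  (forall t, u <= t <= v -> continuous g t) ->
  ex_RInt f u v -> (forall t, u < t < v -> f t <= g t) ->
  RInt f u v <= G v - G u.
Proof.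
  intros Huv HG Hc Hf Hfg.
  assert (HI : is_RInt g u v (minus (G v) (G u))).
  { apply (@is_RInt_derive R_CompleteNormedModule).
    intros t Ht; apply HG; rewrite Rmin_left, Rmax_right in Ht; auto.
    intros t Ht; apply Hc; rewrite Rmin_left, Rmax_right in Ht; auto. }
  replace (G v - G u) with (RInt g u v).
  apply RInt_le; auto. exists (minus (G v) (G u)); auto.
  apply (@is_RInt_unique R_CompleteNormedModule) in HI. rewrite HI. reflexivity.
Qed.

Definition P (s u : R) := RInt (gi s) 1 u.

Lemma P_diff s u v : 0 < u -> 0 < v -> P s v - P s u = RInt (gi s) u v.
Proof.
  intros Hu Hv. unfold P.
  rewrite <- (RInt_Chasles (gi s) 1 u v) by (apply gi_exRInt; lra).
  change (RInt (gi s) 1 u + RInt (gi s) u v - RInt (gi s) 1 u = RInt (gi s) u v). ring.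
Qed.

Lemma RInt_gi_nonneg s u v : 0 < u -> u <= v -> 0 <= RInt (gi s) u v.
Proof.
  intros Hu Huv. apply RInt_ge_0; auto. apply gi_exRInt; lra.
  intros; left; apply gi_pos.
Qed.

Lemma RInt_gi_swap s u v : 0 < u -> 0 < v -> RInt (gi s) u v = - RInt (gi s) v u.
Proof.
  intros Hu Hv. rewrite <- (opp_RInt_swap (gi s) v u). reflexivity. apply gi_exRInt; lra.
Qed.

Lemma exp_sub_ln a t : 0 < t -> exp ((a - 1) * ln t) = exp (a * ln t) / t.
Proof.
  intro Ht. replace ((a - 1) * ln t) with (a * ln t + - ln t) by ring.
  rewrite exp_plus, exp_Ropp, exp_ln; auto.
Qed.

Lemma RInt_bound0 s u v : 0 < s -> 0 < u -> u <= v -> RInt (gi s) u v <= exp (s * ln v) / s.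
Proof.
  intros Hs Hu Huv.
  apply Rle_trans with ((fun t => exp (s * ln t) / s) v - (fun t => exp (s * ln t) / s) u).
  - apply (RInt_le_prim (gi s) (fun t => exp ((s - 1) * ln t)) (fun t => exp (s * ln t) / s)); auto.
    + intros t Ht. auto_derive. lra. rewrite exp_sub_ln by lra. field. lra.
    + intros t Ht. apply (@ex_derive_continuous R_AbsRing R_NormedModule). auto_derive. lra.
    + apply gi_exRInt; lra.
    + intros t Ht. rewrite gi_eq. apply exp_le. lra.
  - simpl. assert (0 < exp (s * ln u) / s) by (apply Rdiv_lt_0_compat; auto; apply exp_pos). lra.
Qed.

Lemma RInt_boundinf s u v : 0 < s -> 0 < u -> u <= v -> RInt (gi s) u v <= Cinf s / u.
Proof.
  intros Hs Hu Huv.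
  apply Rle_trans with ((fun t => - Cinf s / t) v - (fun t => - Cinf s / t) u).
  - apply (RInt_le_prim (gi s) (fun t => Cinf s / (t * t)) (fun t => - Cinf s / t)); auto.
    + intros t Ht. auto_derive. lra. field. lra.
    + intros t Ht. apply (@ex_derive_continuous R_AbsRing R_NormedModule). auto_derive. nra.
    + apply gi_exRInt; lra.
    + intros t Ht. apply gi_bound_inf; lra.
  - simpl. assert (0 < Cinf s) by apply exp_pos.
    assert (0 < Cinf s / v) by (apply Rdiv_lt_0_compat; lra).
    unfold Rdiv in *. lra.
Qed.

Lemma abs_RInt_gi s u v : 0 < u -> 0 < v -> forall B,
  (forall a b, 0 < a -> a <= b -> (u = a /\ v = b \/ u = b /\ v = a) -> RInt (gi s) a b < B) ->
  Rabs (P s v - P s u) < B.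
Proof.
  intros Hu Hv B HB. rewrite P_diff by auto.
  destruct (Rle_or_lt u v) as [H|H].
  - rewrite Rabs_right. apply HB; auto. apply Rle_ge, RInt_gi_nonneg; auto.
  - rewrite RInt_gi_swap by auto. rewrite Rabs_Ropp, Rabs_right.
    apply HB; auto; lra. apply Rle_ge, RInt_gi_nonneg; auto; lra.
Qed.

Lemma P_lim_inf s : 0 < s -> exists l, filterlim (P s) (Rbar_locally p_infty) (locally l).
Proof.
  intro Hs. apply (filterlim_locally_cauchy (F := Rbar_locally p_infty)).
  intro eps. assert (HC : 0 < Cinf s) by apply exp_pos.
  set (M := Cinf s / eps + 1).
  assert (HM : 0 < Cinf s / eps) by (apply Rdiv_lt_0_compat; auto; apply cond_pos).
  exists (fun u => M < u). split. exists M; auto.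
  intros u v Hu Hv. change (Rabs (P s v - P s u) < eps).
  apply abs_RInt_gi; try (unfold M in *; lra).
  intros a b Ha Hab Hc.
  apply Rle_lt_trans with (Cinf s / a). apply RInt_boundinf; auto.
  assert (M < a) by (destruct Hc as [[E1 E2]|[E1 E2]]; subst; lra).
  assert (Hep := cond_pos eps).
  apply Rmult_lt_reg_r with a. lra. unfold Rdiv. rewrite Rmult_assoc, Rinv_l by lra.
  unfold M in *. 
  assert (Cinf s = Cinf s / eps * eps) by (field; lra).
  nra.
Qed.

Lemma P_lim_0 s : 0 < s -> exists l, filterlim (P s) (at_right 0) (locally l).
Proof.
  intro Hs. apply (filterlim_locally_cauchy (F := at_right 0)).
  intro eps. assert (Hep := cond_pos eps).
  set (d := Rmin 1 (exp (ln (eps * s) / s))).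
  assert (Hd : 0 < d) by (apply Rmin_glb_lt; [lra|apply exp_pos]).
  exists (fun u => 0 < u < d). split.
  - exists (mkposreal d Hd). intros y Hy Hy0. split; auto.
    change (Rabs (y - 0) < d) in Hy. rewrite Rminus_0_r, Rabs_right in Hy; lra.
  - intros u v [Hu Hu'] [Hv Hv']. change (Rabs (P s v - P s u) < eps).
    apply abs_RInt_gi; auto.
    intros a b Ha Hab Hc.
    assert (Hb : 0 < b < d) by (destruct Hc as [[E1 E2]|[E1 E2]]; subst; lra).
    apply Rle_lt_trans with (exp (s * ln b) / s). apply RInt_bound0; auto.
    apply Rmult_lt_reg_r with s; auto. unfold Rdiv. rewrite Rmult_assoc, Rinv_l by lra.
    rewrite Rmult_1_r.
    rewrite <- (exp_ln (eps * s)) by nra.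
    apply exp_increasing.
    assert (ln b < ln (exp (ln (eps * s) / s))).
    { apply ln_increasing. lra. apply Rlt_le_trans with d. lra. apply Rmin_r. }
    rewrite ln_exp in H.
    apply Rmult_lt_compat_l with (r := s) in H; auto.
    replace (s * (ln (eps * s) / s)) with (ln (eps * s)) in H by (field; lra). lra.
Qed.

Notation FA := (at_right 0).
Notation FB := (Rbar_locally p_infty).

Lemma prod_pos (Pp : R * R -> Prop) : (forall a b, 0 < a -> 0 < b -> Pp (a, b)) ->
  filter_prod FA FB Pp.
Proof.
  intro H. apply Filter_prod with (fun a => 0 < a) (fun b => 0 < b); auto.
  - exists (mkposreal 1 Rlt_0_1). intros; auto.
  - exists 0. intros; auto.
Qed.

Lemma prod_min_pos (Pp : R -> Prop) : (forall x, 0 < x -> Pp x) ->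
  filter_prod FA FB (fun ab => forall x, Rmin (fst ab) (snd ab) <= x <= Rmax (fst ab) (snd ab) -> Pp x).
Proof.
  intro H. apply prod_pos. intros a b Ha Hb x Hx. apply H. simpl in Hx.
  assert (0 < Rmin a b) by (apply Rmin_glb_lt; auto). lra.
Qed.

Lemma prod_min_pos' (Pp : R -> Prop) : (forall x, 0 < x -> Pp x) ->
  filter_prod FA FB (fun ab => forall x, Rmin (fst ab) (snd ab) < x < Rmax (fst ab) (snd ab) -> Pp x).
Proof.
  intro H. apply prod_pos. intros a b Ha Hb x Hx. apply H. simpl in Hx.
  assert (0 < Rmin a b) by (apply Rmin_glb_lt; auto). lra.
Qed.

Lemma irg_ext (f g : R -> R) (l : R) : (forall t, 0 < t -> f t = g t) ->
  is_RInt_gen f FA FB l -> is_RInt_gen g FA FB l.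
Proof.
  intros H Hf. apply (@is_RInt_gen_ext R_NormedModule FA FB _ _ f g l); auto.
  apply prod_min_pos'. auto.
Qed.

Lemma irg_unique (f : R -> R) (l1 l2 : R) :
  is_RInt_gen f FA FB l1 -> is_RInt_gen f FA FB l2 -> l1 = l2.
Proof.
  intros H1 H2.
  apply (@is_RInt_gen_unique R_CompleteNormedModule FA FB _ _) in H1.
  apply (@is_RInt_gen_unique R_CompleteNormedModule FA FB _ _) in H2.
  rewrite <- H1, <- H2. reflexivity.
Qed.

Lemma loc_pos x : 0 < x -> locally x (fun y => 0 < y).
Proof.
  intro Hx. exists (mkposreal (x/2) ltac:(lra)). intros y Hy.
  change (Rabs (y - x) < x / 2) in Hy. apply Rabs_lt_between in Hy. lra.
Qed.

Lemma P_derive s x : 0 < x -> is_derive (P s) x (gi s x).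
Proof.
  intro Hx. apply (@is_derive_RInt R_NormedModule (gi s) (P s) 1 x).
  - apply (filter_imp (fun y => 0 < y)); [|apply loc_pos; auto].
    intros y Hy. unfold P. apply (@RInt_correct R_CompleteNormedModule). apply gi_exRInt; lra.
  - apply gi_cont; auto.
Qed.

Lemma Gamma_ex s : 0 < s -> is_RInt_gen (gi s) FA FB (Gamma s) /\ 0 < Gamma s.
Proof.
  intro Hs.
  destruct (P_lim_0 s Hs) as [l0 H0]. destruct (P_lim_inf s Hs) as [l1 H1].
  assert (HD : is_RInt_gen (Derive (P s)) FA FB (l1 - l0)).
  { apply (@is_RInt_gen_Derive FA FB _ _ (P s) l0 l1); auto.
    - apply prod_min_pos. intros x Hx. exists (gi s x). apply P_derive; auto.
    - apply prod_min_pos. intros x Hx.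
      apply (continuous_ext_loc _ (gi s)).
      + apply (filter_imp (fun y => 0 < y)); [|apply loc_pos; auto].
        intros y Hy. symmetry. apply is_derive_unique. apply P_derive; auto.
      + apply gi_cont; auto. }
  assert (HG : is_RInt_gen (gi s) FA FB (l1 - l0)).
  { apply (irg_ext (Derive (P s))); auto. intros t Ht. apply is_derive_unique, P_derive; auto. }
  assert (E : Gamma s = l1 - l0).
  { unfold Gamma. apply (@is_RInt_gen_unique R_CompleteNormedModule FA FB _ _). exact HG. }
  rewrite E. split; auto.
  assert (Hl0 : l0 <= 0).
  { assert (HL := filterlim_le (F := FA) (P s) (fun _ => 0) l0 0).
    simpl in HL. apply HL.
    - exists (mkposreal 1 Rlt_0_1). intros y Hy Hy0.
      change (Rabs (y - 0) < 1) in Hy. rewrite Rminus_0_r, Rabs_right in Hy by lra.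
      unfold P. rewrite RInt_gi_swap by lra.
      assert (0 <= RInt (gi s) y 1) by (apply RInt_gi_nonneg; lra). lra.
    - exact H0.
    - apply filterlim_const. }
  assert (Hl1 : P s 2 <= l1).
  { assert (HL := filterlim_le (F := FB) (fun _ => P s 2) (P s) (P s 2) l1).
    simpl in HL. apply HL.
    - exists 2. intros y Hy.
      assert (E2 := P_diff s 2 y ltac:(lra) ltac:(lra)).
      assert (0 <= RInt (gi s) 2 y) by (apply RInt_gi_nonneg; lra). lra.
    - apply filterlim_const.
    - exact H1. }
  assert (0 < P s 2).
  { unfold P. apply RInt_gt_0. lra. intros; apply gi_pos. intros; apply gi_cont; lra. }
  lra.
Qed.

Lemma irg_lin (f g : R -> R) (lf lg a b : R) :
  is_RInt_gen f FA FB lf -> is_RInt_gen g FA FB lg ->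
  is_RInt_gen (fun t => a * f t + b * g t) FA FB (a * lf + b * lg).
Proof.
  intros Hf Hg.
  apply (@is_RInt_gen_scal R_NormedModule FA FB _ _ f a) in Hf.
  apply (@is_RInt_gen_scal R_NormedModule FA FB _ _ g b) in Hg.
  exact (@is_RInt_gen_plus R_NormedModule FA FB _ _ _ _ _ _ Hf Hg).
Qed.

Lemma irg_le (f g : R -> R) (lf lg : R) : (forall t, 0 < t -> 0 <= f t <= g t) ->
  is_RInt_gen f FA FB lf -> is_RInt_gen g FA FB lg -> lf <= lg.
Proof.
  intros H Hf Hg.
  assert (HN := @RInt_gen_norm R_CompleteNormedModule FA FB _ _ f g lf lg).
  apply Rle_trans with (norm lf). apply Rle_abs.
  apply HN; auto.
  - apply Filter_prod with (fun a => a < 1) (fun b => 1 < b).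
    + exists (mkposreal 1 Rlt_0_1). intros y Hy _. change (Rabs (y - 0) < 1) in Hy.
      apply Rabs_lt_between in Hy. lra.
    + exists 1. auto.
    + intros; simpl; lra.
  - apply prod_pos. intros a b Ha Hb x Hx. simpl in Hx.
    change (Rabs (f x) <= g x). rewrite Rabs_right. apply H; lra. apply Rle_ge, H; lra.
Qed.

Definition Hf (s t : R) := exp (s * ln t - t).

Lemma Gamma_rec s : 0 < s -> Gamma (s + 1) = s * Gamma s.
Proof.
  intro Hs.
  destruct (Gamma_ex s Hs) as [G1 _]. destruct (Gamma_ex (s+1) ltac:(lra)) as [G2 _].
  assert (Hder : forall t, 0 < t -> is_derive (Hf s) t (s * gi s t + -1 * gi (s + 1) t)).
  { intros t Ht. unfold Hf. auto_derive. lra. rewrite !gi_eq.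
    replace ((s - 1) * ln t - t) with ((s * ln t - t) + - ln t) by ring.
    replace ((s + 1 - 1) * ln t - t) with (s * ln t - t) by ring.
    rewrite (exp_plus (s * ln t - t) (- ln t)), (exp_Ropp (ln t)), exp_ln by lra. replace (s * ln t + - t) with (s * ln t - t) by ring. change (RinvImpl.Rinv t) with (/ t). field. lra. }
  assert (HD : is_RInt_gen (Derive (Hf s)) FA FB (0 - 0)).
  { apply (@is_RInt_gen_Derive FA FB _ _ (Hf s) 0 0).
    - apply prod_min_pos. intros x Hx. eexists. apply Hder; auto.
    - apply prod_min_pos. intros x Hx.
      apply (continuous_ext_loc _ (fun t => s * gi s t + -1 * gi (s + 1) t)).
      + apply (filter_imp (fun y => 0 < y)); [|apply loc_pos; auto].
        intros y Hy. symmetry. apply is_derive_unique. apply Hder; auto.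
      + apply (@ex_derive_continuous R_AbsRing R_NormedModule).
        apply (ex_derive_ext (fun t => s * exp ((s - 1) * ln t - t) + -1 * exp ((s + 1 - 1) * ln t - t))).
        intro t; rewrite !gi_eq; reflexivity. auto_derive. lra.
    - apply filterlim_locally. intro eps. assert (He := cond_pos eps).
      exists (mkposreal (exp (ln eps / s)) (exp_pos _)). intros y Hy Hy0.
      change (Rabs (y - 0) < exp (ln eps / s)) in Hy. rewrite Rminus_0_r, Rabs_right in Hy by lra.
      change (Rabs (Hf s y - 0) < eps). unfold Hf. rewrite Rminus_0_r, Rabs_right by (left; apply exp_pos).
      rewrite <- (exp_ln eps) by lra. apply exp_increasing.
      apply ln_increasing in Hy; auto. rewrite ln_exp in Hy.
      apply Rmult_lt_compat_l with (r := s) in Hy; auto.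
      replace (s * (ln eps / s)) with (ln eps) in Hy by (field; lra). lra.
    - apply filterlim_locally. intro eps. assert (He := cond_pos eps).
      assert (HC : 0 < Cinf (s+1)) by apply exp_pos.
      assert (HM : 0 < Cinf (s+1) / eps) by (apply Rdiv_lt_0_compat; auto).
      exists (Cinf (s+1) / eps + 1). intros y Hy.
      change (Rabs (Hf s y - 0) < eps). unfold Hf. rewrite Rminus_0_r, Rabs_right by (left; apply exp_pos).
      assert (Hb := gi_bound_inf (s+1) y ltac:(lra) ltac:(lra)).
      rewrite gi_eq in Hb. replace ((s + 1 - 1) * ln y - y) with (s * ln y - y) in Hb by ring.
      eapply Rle_lt_trans. exact Hb.
      apply Rmult_lt_reg_r with (y * y). nra. unfold Rdiv. rewrite Rmult_assoc, Rinv_l by nra.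
      assert (Cinf (s+1) = Cinf (s+1) / eps * eps) by (field; lra).
      assert (y * y > y) by nra.
      assert (eps * (y*y) > eps * (Cinf (s+1) / eps)) by (apply Rmult_lt_compat_l; lra).
      lra. }
  assert (HL := irg_lin _ _ _ _ s (-1) G1 G2).
  assert (HD' : is_RInt_gen (fun t => s * gi s t + -1 * gi (s + 1) t) FA FB (0 - 0)).
  { apply (irg_ext (Derive (Hf s))); auto. intros t Ht. apply is_derive_unique, Hder; auto. }
  assert (E := irg_unique _ _ _ HL HD'). lra.
Qed.

Lemma exp_convex a p q : 0 <= a <= 1 -> exp (a * p + (1 - a) * q) <= a * exp p + (1 - a) * exp q.
Proof.
  intro Ha. set (m := a * p + (1 - a) * q).
  assert (E1 : exp p = exp m * exp (p - m)) by (rewrite <- exp_plus; f_equal; ring).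
  assert (E2 : exp q = exp m * exp (q - m)) by (rewrite <- exp_plus; f_equal; ring).
  assert (H1 := exp_ineq1_le (p - m)). assert (H2 := exp_ineq1_le (q - m)).
  assert (Hm := exp_pos m).
  rewrite E1, E2.
  assert (a * (p - m) + (1 - a) * (q - m) = 0) by (unfold m; ring).
  assert (exp m * (1 + (p - m)) <= exp m * exp (p - m)) by (apply Rmult_le_compat_l; lra).
  assert (exp m * (1 + (q - m)) <= exp m * exp (q - m)) by (apply Rmult_le_compat_l; lra).
  nra.
Qed.

Lemma exp_minus_ln X F : 0 < F -> exp (X - ln F) = exp X / F.
Proof. intro HF. unfold Rminus. rewrite exp_plus, exp_Ropp, exp_ln; auto. Qed.

Lemma Gamma_holder s1 s2 a : 0 < s1 -> 0 < s2 -> 0 <= a <= 1 ->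
  Gamma (a * s1 + (1 - a) * s2) <= exp (a * ln (Gamma s1) + (1 - a) * ln (Gamma s2)).
Proof.
  intros H1 H2 Ha.
  assert (Hs : 0 < a * s1 + (1 - a) * s2) by nra.
  destruct (Gamma_ex _ H1) as [G1 P1]. destruct (Gamma_ex _ H2) as [G2 P2].
  destruct (Gamma_ex _ Hs) as [G0 P0].
  set (F := Gamma s1) in *. set (G := Gamma s2) in *.
  set (K := exp (a * ln F + (1 - a) * ln G)).
  assert (HK : 0 < K) by apply exp_pos.
  assert (HL := irg_lin _ _ _ _ (K * a / F) (K * (1 - a) / G) G1 G2).
  assert (EK : K * a / F * F + K * (1 - a) / G * G = K) by (field; lra).
  apply Rle_trans with (K * a / F * F + K * (1 - a) / G * G); [|right; exact EK].
  refine (irg_le _ _ _ _ _ G0 HL).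
  intros t Ht. cbv beta. split. left; apply gi_pos.
  set (p := (s1 - 1) * ln t - t - ln F). set (q := (s2 - 1) * ln t - t - ln G).
  assert (Ep : exp p = gi s1 t / F) by (unfold p; rewrite exp_minus_ln, gi_eq; auto).
  assert (Eq : exp q = gi s2 t / G) by (unfold q; rewrite exp_minus_ln, gi_eq; auto).
  assert (E0 : gi (a * s1 + (1 - a) * s2) t = exp (a * p + (1 - a) * q) * K).
  { rewrite gi_eq. unfold K. rewrite <- exp_plus. f_equal. unfold p, q. ring. }
  rewrite E0. assert (HC := exp_convex a p q Ha).
  rewrite Ep, Eq in HC.
  apply Rle_trans with ((a * (gi s1 t / F) + (1 - a) * (gi s2 t / G)) * K).
  apply Rmult_le_compat_r; lra.
  right. field. lra.
Qed.

Definition Gr (x k : R) := Gamma (k + x) * Gamma (k - x) / (Gamma k) ^ 2.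

Lemma Gpos s : 0 < s -> 0 < Gamma s.
Proof. intro H; apply (Gamma_ex s H). Qed.

Lemma F1 x : Rabs x < 1 -> forall n, (1 <= n)%nat -> Gr x (INR (S n)) = Gr x (INR n) * (1 - x ^ 2 * c n 0).
Proof.
  intros hx n Hn. assert (Hn1 : 1 <= INR n) by (apply INR_pos; auto).
  apply Rabs_lt_between in hx.
  unfold Gr, c. rewrite S_INR. replace (n + 0)%nat with n by lia.
  replace (INR n + 1 + x) with ((INR n + x) + 1) by ring.
  replace (INR n + 1 - x) with ((INR n - x) + 1) by ring.
  rewrite !Gamma_rec by lra.
  assert (0 < Gamma (INR n)) by (apply Gpos; lra).
  field. split; lra.
Qed.

Lemma sq_exp u : exp u ^ 2 = exp (2 * u).
Proof. simpl. rewrite Rmult_1_r, <- exp_plus. f_equal; ring. Qed.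

Lemma F2 x : Rabs x < 1 -> forall n, (1 <= n)%nat -> 1 <= Gr x (INR n).
Proof.
  intros hx n Hn. assert (Hn1 : 1 <= INR n) by (apply INR_pos; auto).
  apply Rabs_lt_between in hx.
  assert (H := Gamma_holder (INR n + x) (INR n - x) (1/2) ltac:(lra) ltac:(lra) ltac:(lra)).
  replace (1 / 2 * (INR n + x) + (1 - 1 / 2) * (INR n - x)) with (INR n) in H by field.
  assert (Ga := Gpos (INR n + x) ltac:(lra)). assert (Gb := Gpos (INR n - x) ltac:(lra)).
  assert (Gc := Gpos (INR n) ltac:(lra)).
  assert (H2 : Gamma (INR n) ^ 2 <= Gamma (INR n + x) * Gamma (INR n - x)).
  { apply Rle_trans with (exp (1 / 2 * ln (Gamma (INR n + x)) + (1 - 1 / 2) * ln (Gamma (INR n - x))) ^ 2).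
    apply pow_incr; lra.
    rewrite sq_exp. replace (2 * (1 / 2 * ln (Gamma (INR n + x)) + (1 - 1 / 2) * ln (Gamma (INR n - x))))
      with (ln (Gamma (INR n + x)) + ln (Gamma (INR n - x))) by field.
    rewrite exp_plus, !exp_ln by lra. lra. }
  unfold Gr. apply Rmult_le_reg_r with (Gamma (INR n) ^ 2). apply pow_lt; lra.
  unfold Rdiv. rewrite Rmult_assoc, Rinv_l. lra. apply pow_nonzero; lra.
Qed.

Lemma upper_b b m : 0 <= b < 1 -> 2 <= m ->
  Gamma (m + b) * Gamma (m - b) <= Gamma m ^ 2 * (m / (m - 1)).
Proof.
  intros Hb Hm.
  assert (Gm := Gpos m ltac:(lra)). assert (Gm1 := Gpos (m - 1) ltac:(lra)).
  assert (R1 : Gamma (m + 1) = m * Gamma m) by (apply Gamma_rec; lra).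
  assert (R2 : Gamma m = (m - 1) * Gamma (m - 1)) by (replace m with ((m - 1) + 1) at 1 by ring; apply Gamma_rec; lra).
  assert (H1 := Gamma_holder m (m + 1) (1 - b) ltac:(lra) ltac:(lra) ltac:(lra)).
  replace ((1 - b) * m + (1 - (1 - b)) * (m + 1)) with (m + b) in H1 by ring.
  rewrite R1, ln_mult in H1 by lra.
  assert (H2 := Gamma_holder (m - 1) m b ltac:(lra) ltac:(lra) ltac:(lra)).
  replace (b * (m - 1) + (1 - b) * m) with (m - b) in H2 by ring.
  assert (L2 : ln (Gamma (m - 1)) = ln (Gamma m) - ln (m - 1)).
  { rewrite R2, ln_mult by lra. ring. }
  rewrite L2 in H2.
  assert (Ga := Gpos (m + b) ltac:(lra)). assert (Gb := Gpos (m - b) ltac:(lra)).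
  apply Rle_trans with (exp ((1 - b) * ln (Gamma m) + (1 - (1 - b)) * (ln m + ln (Gamma m))) *
     exp (b * (ln (Gamma m) - ln (m - 1)) + (1 - b) * ln (Gamma m))).
  apply Rmult_le_compat; lra.
  rewrite <- exp_plus.
  replace ((1 - b) * ln (Gamma m) + (1 - (1 - b)) * (ln m + ln (Gamma m)) +
     (b * (ln (Gamma m) - ln (m - 1)) + (1 - b) * ln (Gamma m))) with
     (2 * ln (Gamma m) + b * (ln m - ln (m - 1))) by ring.
  rewrite exp_plus, <- sq_exp, exp_ln by lra.
  apply Rmult_le_compat_l. apply pow_le; lra.
  assert (Hd : 0 <= ln m - ln (m - 1)).
  { assert (ln (m - 1) <= ln m). { destruct (Req_dec (m-1) m); [lra|]. left; apply ln_increasing; lra. } lra. }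
  apply Rle_trans with (exp (ln m - ln (m - 1))).
  apply exp_le. nra.
  unfold Rminus at 1. rewrite exp_plus, exp_Ropp, !exp_ln by lra. right; reflexivity.
Qed.

Lemma F3 x : Rabs x < 1 -> is_lim_seq (fun n => Gr x (INR n)) 1.
Proof.
  intro hx.
  apply (is_lim_seq_incr_n _ 2).
  apply is_lim_seq_le_le with (fun _ => 1) (fun n => 1 + / INR (1 + n)).
  - intro n. split. apply F2; auto; lia.
    assert (Hm : 2 <= INR (n + 2)) by (replace 2 with (INR 2) by (simpl; ring); apply le_INR; lia).
    assert (E : INR (n + 2) / (INR (n + 2) - 1) = 1 + / INR (1 + n)).
    { replace (INR (1 + n)) with (INR (n + 2) - 1) by (rewrite !plus_INR; simpl; ring). field. lra. }
    rewrite <- E.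
    assert (Gc := Gpos (INR (n+2)) ltac:(lra)).
    assert (Hup : Gamma (INR (n + 2) + x) * Gamma (INR (n + 2) - x) <= Gamma (INR (n + 2)) ^ 2 * (INR (n + 2) / (INR (n + 2) - 1))).
    { destruct (Rle_or_lt 0 x) as [Hx|Hx].
      - apply upper_b; auto. rewrite Rabs_right in hx; lra.
      - rewrite Rmult_comm. replace (INR (n + 2) + x) with (INR (n + 2) - - x) by ring.
        replace (INR (n + 2) - x) with (INR (n + 2) + - x) by ring.
        apply upper_b; auto. rewrite Rabs_left in hx; lra. }
    unfold Gr. apply Rmult_le_reg_r with (Gamma (INR (n+2)) ^ 2). apply pow_lt; lra.
    unfold Rdiv at 1. rewrite Rmult_assoc, Rinv_l by (apply pow_nonzero; lra). lra.
  - apply is_lim_seq_const.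
  - replace (Finite 1) with (Finite (1 + 0)) by (f_equal; ring).
    apply is_lim_seq_plus'. apply is_lim_seq_const. apply inv_lim.
Qed.

Theorem proposition3p1 (r : nat) (x : R) (hx : Rabs x < 1) :
  exists L : R,
    is_series (fun m : nat => zeta_star ((r + 2)%nat :: repeat 2%nat m) * x ^ (2 * m)) L /\
    is_series (fun j : nat =>
                 let k := INR (S j) in
                 / k ^ (r + 2) * (Gamma (k + x) * Gamma (k - x) / (Gamma k) ^ 2)) L.
Proof.
  exact (main_abstract r x hx (Gr x) (F1 x hx) (F2 x hx) (F3 x hx)).
Qed.
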